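(* Let $L\subseteq\Sigma^\omega$ be a prefix-independent language recognised by some deterministic coBüchi automaton. Let $\mathcal{A}_{\min}$ be a nice, safe minimal and safe centralised history-deterministic coBüchi automaton recognising $L$, with safe components $\mathcal{S}_1,\dots,\mathcal{S}_k$ (with state sets $S_i$ and transition sets $\Delta_i$), and let $n_{\max}=\max_{1\le i\le k}|S_i|$. Let $Q=\{p_1,\dots,p_{n_{\max}}\}$ and, for each $i$, let $\phi_i:S_i\to Q$ be any injective map; extend it to transitions by $\phi_i(q,a,q')=(\phi_i(q),a,\phi_i(q'))$. Let $\mathcal{A}_{\mathrm{PI}}$ be the generalised coBüchi automaton with states $Q$, initial state $p_1$, transitions $\Delta=Q\times\Sigma\times Q$, colours $\{1,\dots,k\}$, and labelling $\mathrm{col}(e)=\{i\in\{1,\dots,k\} : \text{there is no } e'\in\Delta_i \text{ with } \phi_i(e')=e\}$. Then $\mathcal{A}_{\mathrm{PI}}$ is history-deterministic and $\mathcal{L}(\mathcal{A}_{\mathrm{PI}})=L$.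
   Context: An automaton is a tuple $(Q,\Sigma,q_{\mathrm{init}},\Delta,\Gamma,\mathrm{col},W)$ with finite state set, finite input alphabet $\Sigma$, initial state, transitions $\Delta\subseteq Q\times\Sigma\times Q$, output alphabet $\Gamma$, labelling $\mathrm{col}:\Delta\to\Gamma$, acceptance condition $W\subseteq\Gamma^\omega$. A run on $w=a_1a_2\cdots$ is a sequence $(q_0,a_1,q_1)(q_1,a_2,q_2)\cdots$ of transitions with $q_0=q_{\mathrm{init}}$, accepting if its label sequence is in $W$; $\mathcal{L}(\mathcal{A})$ is the set of words with an accepting run. With a finite colour set $C$ and $\Gamma=2^C$, generalised coBüchi means $W=\{x : \text{some } c\in C \text{ occurs in only finitely many letters of } x\}$; a coBüchi automaton is the case $C=\{1\}$, and its coBüchi transitions are those labelled $\{1\}$. A resolver is a map $\sigma:\Sigma^+\to\Delta$ such that for every $w=a_0a_1\cdots$, $\sigma(a_0)\sigma(a_0a_1)\cdots$ is a run on $w$, accepting whenever $w\in\mathcal{L}(\mathcal{A})$; history-deterministic means a resolver exists. $L$ is prefix-independent if for all $u\in\Sigma^*$, $w\in\Sigma^\omega$: $uw\in L\iff w\in L$. For a coBüchi automaton $\mathcal{A}$: $\mathcal{A}_{\mathrm{safe}}$ is obtained by deleting all coBüchi transitions; a safe component is a strongly connected component of $\mathcal{A}_{\mathrm{safe}}$ (a maximal set of states mutually reachable in $\mathcal{A}_{\mathrm{safe}}$, together with the transitions of $\mathcal{A}_{\mathrm{safe}}$ between them); the safe language of a state $q$ is the set of $w\in\Sigma^\omega$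 having an infinite path from $q$ in $\mathcal{A}_{\mathrm{safe}}$; two states are equivalent if the automaton started from each of them recognises the same language. $\mathcal{A}$ is semantically deterministic if whenever $(q,a,p_1),(q,a,p_2)\in\Delta$, $p_1$ and $p_2$ are equivalent; in normal form if every transition between two different safe components is a coBüchi transition; safe deterministic if $\mathcal{A}_{\mathrm{safe}}$ is deterministic; nice if all states are reachable from the initial state and it is semantically deterministic, in normal form and safe deterministic. It is safe centralised if any two equivalent states whose safe languages are comparable under inclusion lie in the same safe component, and safe minimal if any two equivalent states with equal safe languages are equal. *)

(* Defs.v *)
From HB Require Import structures.
From mathcomp Require Import all_boot.
Set Implicit Arguments. Unset Strict Implicit. Unset Printing Implicit Defensive.

(* All automata use Gamma = {set C} for a finite colour set C, and the
   generalised coBuchi acceptance condition.  A coBuchi automaton is the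
   case C = unit (the single colour tt plays the role of "1"). *)

Record GCBA (Sigma : finType) (C : finType) := MkGCBA {
  state : finType;
  init : state;
  trans : {set state * Sigma * state};
  col : state * Sigma * state -> {set C} }.
Arguments MkGCBA {Sigma C}.
Arguments state {Sigma C} g.
Arguments init {Sigma C} g.
Arguments trans {Sigma C} g.
Arguments col {Sigma C} g _.

Section Automata.
Variables (Sigma : finType) (C : finType).
Implicit Types (A : GCBA Sigma C) (w : nat -> Sigma).

Definition gcb_acc (x : nat -> {set C}) : Prop :=
  exists c : C, exists N : nat, forall n, N <= n -> c \notin x n.

Definition is_run_from A (q : state A) (r : nat -> state A * Sigma * state A) w :=
  (r 0).1.1 = q /\
  forall i, [/\ r i \in trans A, (r i).1.2 = w i & (r i.+1).1.1 = (r i).2].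

Definition accepting A (r : nat -> state A * Sigma * state A) :=
  gcb_acc (fun i => col A (r i)).

Definition lang_from A (q : state A) w : Prop :=
  exists r, is_run_from q r w /\ accepting r.

Definition lang A w : Prop := lang_from (init A) w.

Definition recognises A (L : (nat -> Sigma) -> Prop) := forall w, lang A w <-> L w.

(* resolvers act on nonempty finite words; the value on [::] is irrelevant *)
Definition history_deterministic A : Prop :=
  exists sigma : seq Sigma -> state A * Sigma * state A,
    forall w, is_run_from (init A) (fun i => sigma (mkseq w i.+1)) w /\
              (lang A w -> accepting (fun i => sigma (mkseq w i.+1))).

Definition deterministic A : Prop :=
  forall (q : state A) (a : Sigma), exists! q', (q, a, q') \in trans A.

End Automata.

Definition cat_word (Sigma : Type) (u : seq Sigma) (w : nat -> Sigma) : nat -> Sigma :=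
  fun i => if i < size u then nth (w 0) u i else w (i - size u).

Definition prefix_independent (Sigma : Type) (L : (nat -> Sigma) -> Prop) :=
  forall (u : seq Sigma) (w : nat -> Sigma), L (cat_word u w) <-> L w.

Section CoBuchi.
Variable Sigma : finType.
Notation CBA := (GCBA Sigma unit).
Variable A : CBA.
Implicit Types (q p : state A) (e : state A * Sigma * state A).

Definition cob_trans e : bool := col A e == [set tt].
Definition safe_trans e : bool := (e \in trans A) && ~~ cob_trans e.
Definition safe_rel : rel (state A) := fun q q' => [exists a, safe_trans (q, a, q')].
Definition scc_rel q p : bool := connect safe_rel q p && connect safe_rel p q.
Definition scc q : {set state A} := [set p | scc_rel q p].
Definition is_safe_component (S : {set state A}) := exists q, S = scc q.
Definition comp_trans (S : {set state A}) : {set state A * Sigma * state A} :=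
  [set e | safe_trans e && (e.1.1 \in S) && (e.2 \in S)].

Definition safe_lang q (w : nat -> Sigma) : Prop :=
  exists r : nat -> state A, r 0 = q /\ forall i, safe_trans (r i, w i, r i.+1).

Definition equiv_states q p : Prop := forall w, lang_from q w <-> lang_from p w.

Definition sem_det : Prop := forall q a p1 p2,
  (q, a, p1) \in trans A -> (q, a, p2) \in trans A -> equiv_states p1 p2.
Definition normal_form : Prop := forall q a p,
  (q, a, p) \in trans A -> ~~ scc_rel q p -> cob_trans (q, a, p).
Definition safe_deterministic : Prop := forall q a p1 p2,
  safe_trans (q, a, p1) -> safe_trans (q, a, p2) -> p1 = p2.
Definition all_reachable : Prop := forall q,
  connect (fun x y => [exists a, (x, a, y) \in trans A]) (init A) q.
Definition nice : Prop :=
  [/\ all_reachable, sem_det, normal_form & safe_deterministic].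
Definition safe_centralised : Prop := forall q p, equiv_states q p ->
  ((forall w, safe_lang q w -> safe_lang p w) \/
   (forall w, safe_lang p w -> safe_lang q w)) -> scc_rel q p.
Definition safe_minimal : Prop := forall q p, equiv_states q p ->
  (forall w, safe_lang q w <-> safe_lang p w) -> q = p.

End CoBuchi.

(* Components are enumerated as comp : 'I_k -> sets
   (colour i in 'I_k corresponds to S_{i+1}); Q = {p_1..p_nmax} is the
   ordinal type 'I_(nmax.-1.+1) (= 'I_nmax as nmax >= 1), p_1 = ord0. *)
Section API.
Variables (Sigma : finType) (A : GCBA Sigma unit) (k : nat)
          (comp : 'I_k -> {set state A}).

Definition nmax : nat := \max_(i < k) #|comp i|.
Definition PI_state : finType := 'I_(nmax.-1.+1).

Variable phi : 'I_k -> state A -> PI_state.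

Definition phi_tr (i : 'I_k) (e : state A * Sigma * state A) : PI_state * Sigma * PI_state :=
  (phi i e.1.1, e.1.2, phi i e.2).

Definition A_PI : GCBA Sigma ('I_k) :=
  MkGCBA PI_state ord0 setT
    (fun e => [set i : 'I_k | ~~ [exists e', (e' \in comp_trans (comp i)) && (phi_tr i e' == e)]]).

End API.

(* Main.v *)
From Stdlib Require Import FunctionalExtensionality.
Require Import Defs.
From HB Require Import structures.
From mathcomp Require Import all_boot.
Set Implicit Arguments. Unset Strict Implicit. Unset Printing Implicit Defensive.

Lemma unit_set (X : {set unit}) : tt \in X -> X = [set tt].
Proof. move=> h; apply/setP => -[]; by rewrite in_set1 eqxx h. Qed.

Lemma safe_notcol Sigma (A : GCBA Sigma unit) e : safe_trans e -> tt \notin col A e.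
Proof.
case/andP=> _ /negP h; apply/negP=> /unit_set H; apply: h; by rewrite /cob_trans H.
Qed.

Lemma safe_lang_lang Sigma (A : GCBA Sigma unit) (q : state A) (w : nat -> Sigma) : safe_lang q w -> lang_from q w.
Proof.
case=> r [r0 hr]; exists (fun i => (r i, w i, r i.+1)); split.
  split=> // i; case/andP: (hr i) => ht _; by split.
exists tt, 0 => n _; exact: safe_notcol.
Qed.

Lemma lang_prepend Sigma C (A : GCBA Sigma C) (x y : state A) (a : Sigma) (v : nat -> Sigma) :
  (x, a, y) \in trans A -> lang_from y v ->
  lang_from x (fun i => if i is j.+1 then v j else a).
Proof.
move=> hxy [r [[r0 hr] [c [N hN]]]].
exists (fun i => if i is j.+1 then r j else (x, a, y)); split.
  split=> // -[|i] /=; first by split=> //; rewrite r0.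
  exact: hr.
exists c, N.+1 => -[|n] //= hn; exact: hN.
Qed.

Lemma reach_lang Sigma (A : GCBA Sigma unit) p (x : state A) :
  path (fun x y => [exists a, (x, a, y) \in trans A]) x p ->
  forall v, lang_from (last x p) v -> exists u, lang_from x (cat_word u v).
Proof.
elim: p x => [|y p IH] x /=.
  move=> _ v h; exists [::].
  have -> : cat_word [::] v = v by apply: functional_extensionality => i; rewrite /cat_word /= subn0.
  done.
move=> /andP[/existsP[a ha] hp] v hl; case: (IH y hp v hl) => u hu.
exists (a :: u).
suff -> : cat_word (a :: u) v = (fun i => if i is j.+1 then cat_word u v j else a).
  exact: lang_prepend ha hu.
apply: functional_extensionality => -[|i] //.
Qed.

Lemma scc_eq Sigma (A : GCBA Sigma unit) (q p : state A) : scc_rel q p -> scc q = scc p.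
Proof.
case/andP=> h1 h2; apply/setP=> x; rewrite /scc !inE /scc_rel.
apply/andP/andP=> -[a b]; split.
- exact: connect_trans h2 a.
- exact: connect_trans b h1.
- exact: connect_trans h1 a.
- exact: connect_trans b h2.
Qed.

Lemma scc_self Sigma (A : GCBA Sigma unit) (q : state A) : q \in scc q.
Proof. by rewrite /scc inE /scc_rel connect0. Qed.

Theorem proposition20 (Sigma : finType) (L : (nat -> Sigma) -> Prop)
  (Amin : GCBA Sigma unit) (k : nat) (comp : 'I_k -> {set state Amin})
  (phi : 'I_k -> state Amin -> PI_state comp) :
  prefix_independent L ->
  (exists D : GCBA Sigma unit, deterministic D /\ recognises D L) ->
  nice Amin -> safe_minimal Amin -> safe_centralised Amin ->
  history_deterministic Amin -> recognises Amin L ->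
  (forall i, is_safe_component (comp i)) -> injective comp ->
  (forall S, is_safe_component S -> exists i, comp i = S) ->
  (forall i, {in comp i &, injective (phi i)}) ->
  history_deterministic (A_PI phi) /\ recognises (A_PI phi) L.
Proof.
move=> PI _ [reach _ nf _] _ _ hd rec compS compinj compall phiinj.
have dir1 : forall w, lang (A_PI phi) w -> L w.
  move=> w [r [[r0 hr] [i [N hN]]]].
  pose P m (e' : state Amin * Sigma * state Amin) :=
    (e' \in comp_trans (comp i)) && (phi_tr phi i e' == r m).
  pose g m := odflt (init Amin, w 0, init Amin) [pick e' | P m e'].
  have hP : forall m, N <= m -> P m (g m).
    move=> m hm; have := hN m hm; rewrite /= inE negbK => /existsP[e' he'].
    rewrite /g; case: pickP => [e'' //|/(_ e')]; by rewrite /P he'.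
  have gstep : forall m, N <= m ->
      g m = ((g m).1.1, w m, (g m.+1).1.1) /\ safe_trans (g m).
    move=> m hm; have /andP[h1 /eqP h2] := hP m hm.
    have /andP[h1' /eqP h2'] := hP m.+1 (leqW hm).
    move: h1 h1'; rewrite !inE => /andP[/andP[hs _] hin2] /andP[/andP[_ hin1'] _].
    split=> //.
    case: (hr m) => _ hw hlink.
    have e1 : (g m).1.2 = w m by rewrite -hw -h2.
    have e2 : (g m).2 = (g m.+1).1.1.
      apply: (phiinj i) => //.
      move: (congr1 (fun e => e.2) h2) (congr1 (fun e => e.1.1) h2').
      rewrite /phi_tr /= => -> ->; by rewrite hlink.
    by rewrite -e1 -e2; case: (g m) => [[? ?] ?].
  pose f n := (g (n + N)).1.1.
  have sl : safe_lang (f 0) (fun n => w (n + N)).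
    exists f; split=> // n; have [e hs] := gstep (n + N) (leq_addl _ _).
    by rewrite /f addSn -e.
  have [u hu] : exists u, lang Amin (cat_word u (fun n => w (n + N))).
    have /connectP[p hp hl] := reach (f 0).
    apply: (reach_lang hp); rewrite -hl; exact: safe_lang_lang sl.
  have : L (fun n => w (n + N)) by apply/(PI u)/rec.
  move/(PI (mkseq w N)).
  suff -> : cat_word (mkseq w N) (fun n => w (n + N)) = w by [].
  apply: functional_extensionality => n; rewrite /cat_word size_mkseq.
  case: ltnP => h; [by rewrite nth_mkseq | by rewrite subnK].
case: hd => sigma hsig.
pose c q := [pick i | comp i == scc q].
pose st q : PI_state comp := if c q is Some i then phi i q else ord0.
pose sig' (s : seq Sigma) : PI_state comp * Sigma * PI_state comp :=
  let e := sigma s in (if size s <= 1 then ord0 else st e.1.1, e.1.2, st e.2).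
have run' : forall w, is_run_from (init (A_PI phi)) (fun i => sig' (mkseq w i.+1)) w.
  move=> w; case: (hsig w) => [[_ hr]] _; split; first by rewrite /sig' size_mkseq.
  move=> i; case: (hr i) => _ hw hl; split.
  - by rewrite /= in_setT.
  - by rewrite /sig' /= hw.
  - by rewrite /sig' /= hl.
have acc' : forall w, lang Amin w ->
    @accepting _ _ (A_PI phi) (fun i => sig' (mkseq w i.+1)).
  move=> w hw; case: (hsig w) => [[_ hr] /(_ hw) [cc [N hN]]].
  pose q n := (sigma (mkseq w n.+1)).1.1.
  have hs : forall n, N <= n -> safe_trans (sigma (mkseq w n.+1)).
    move=> n hn; have := hN n hn; case: cc {hN} => h.
    rewrite /safe_trans; case: (hr n) => -> _ _ /=.
    apply/negP => /eqP E; by rewrite E in_set1 in h.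
  have hq : forall n, sigma (mkseq w n.+1) = (q n, w n, q n.+1).
    move=> n; case: (hr n) => _ hw' hl; rewrite /q hl -hw'; by case: (sigma _) => [[]].
  have hrel : forall n, N <= n -> scc_rel (q n) (q n.+1).
    move=> n hn; have := hs n hn; rewrite hq => hst.
    apply/negPn/negP => hn'; case/andP: hst => ht hnc.
    by rewrite (nf _ _ _ ht hn') in hnc.
  have hscc0 : forall d, scc (q (N + d)) = scc (q N).
    elim=> [|d IH]; first by rewrite addn0.
    by rewrite addnS -(scc_eq (hrel _ (leq_addr _ _))).
  have hscc : forall n, N <= n -> scc (q n) = scc (q N).
    by move=> n hn; rewrite -(subnKC hn).
  have [i hi] := compall _ (ex_intro _ (q N) erefl).
  have hc : forall n, N <= n -> st (q n) = phi i (q n).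
    move=> n hn; rewrite /st /c; case: pickP => [j /eqP hj|/(_ i)].
      have -> : j = i by apply: compinj; rewrite hj hscc // hi.
      done.
    by rewrite hi hscc // eqxx.
  exists i, N.+1 => n hn.
  have hnN : N <= n by exact: ltnW.
  rewrite /= inE negbK; apply/existsP; exists (sigma (mkseq w n.+1)).
  have nz : (n.+1 <= 1) = false.
    by rewrite ltnS leqn0; apply/negbTE; rewrite -lt0n; exact: leq_ltn_trans (leq0n N) hn.
  rewrite /sig' size_mkseq nz hq /= (hc _ hnN) (hc _ (leqW hnN)).
  apply/andP; split; last by rewrite /phi_tr.
  rewrite inE /=; have := hs n hnN; rewrite hq => -> /=.
  rewrite hi -(hscc n hnN) scc_self /= /scc inE; exact: hrel.
split.
  exists sig' => w; split; first exact: run'.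
  move=> /dir1 /rec; exact: acc'.
move=> w; split; first exact: dir1.
move=> /rec hw; exists (fun i => sig' (mkseq w i.+1)); split; [exact: run' | exact: acc'].
Qed.
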